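(* Let $G$ be a graph, let $Q\subset B\subset G$ and $x\in B$. Let $\xi$ be a random walk started at $x$ and stopped upon exiting $B$ (identified with its trace). Then for every positive integer $t$, $$\Pr[\xi\cap Q\neq\emptyset]\ge \Pr[B\subset A_t(x\mapsto B)]\cdot\frac{|Q|}{t}.$$
   Context: $G$ is a connected locally finite graph and ''random walk'' means simple random walk on $G$. IDLA with pausing: for finite $S\subset G$, $y\in G$, $T\subset G$, let $\zeta$ be a random walk started at $y$, $t_S$ the first time $\zeta\notin S$, $t_T$ the first time $\zeta\notin T$, and $A(S;y\mapsto T)=S\cup\{\zeta(t_S\wedge(t_T-1))\}$. For $y_1,\dots,y_k$ define inductively (independent walks) $S_0=S$, $S_j=A(S_{j-1};y_j\mapsto T)$, $A(S;y_1,\dots,y_k\mapsto T)=S_k$. Then $A_t(x\mapsto B)=A(\emptyset;x,\dots,x\mapsto B)$ with $t$ copies of $x$. *)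

(* Defs.v *)
From HB Require Import structures.
From mathcomp Require Import all_boot all_order all_algebra.
From mathcomp Require Import finmap.
From mathcomp Require Import all_classical all_reals all_analysis.

Set Implicit Arguments.
Unset Strict Implicit.
Unset Printing Implicit Defensive.

Import Order.TTheory GRing.Theory Num.Theory.

Local Open Scope ring_scope.

(* A locally finite simple graph on a vertex type V is given by its finite
   neighbour lists [adj v]. *)
Definition simple_graph (V : choiceType) (adj : V -> seq V) : Prop :=
  (forall u, uniq (adj u)) /\
  (forall u, u \notin adj u) /\
  (forall u v, (v \in adj u) = (u \in adj v)).

Definition connected_graph (V : choiceType) (adj : V -> seq V) : Prop :=
  forall u v : V, exists p : seq V,
    path (fun a b => b \in adj a) u p /\ last u p = v.

Definition srw_step (R : realType) (V : choiceType) (adj : V -> seq V)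
  (u v : V) : R :=
  if v \in adj u then (size (adj u))%:R^-1 else 0.

(* probability that the walk started at u follows the finite path u :: p
   (i.e. the probability of the corresponding cylinder event) *)
Fixpoint path_weight (R : realType) (V : choiceType) (adj : V -> seq V)
  (u : V) (p : seq V) : R :=
  match p with
  | [::] => 1
  | v :: p' => srw_step R adj u v * path_weight R adj v p'
  end.

(* The path x :: p is the initial segment of the walk up to the first visit
   to Q, all earlier positions lying in B \ Q (so before exiting B). *)
Definition first_hit_path (V : choiceType) (B Q : {fset V}) (x : V)
  (p : seq V) : bool :=
  all (fun v => (v \in B) && (v \notin Q)) (belast x p) && (last x p \in Q).

Local Open Scope ereal_scope.

Definition hit_prob (R : realType) (V : choiceType) (adj : V -> seq V)
  (B Q : {fset V}) (x : V) : \bar R :=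
  \esum_(p in [set p : seq V | first_hit_path B Q x p])
     (path_weight R adj x p)%:E.

Local Close Scope ereal_scope.

(* IDLA with pausing, one particle: walk zeta from y, q = zeta(0..m) with
   q = y :: p, m = size p.  The stopping time is t_S /\ (t_T - 1).
   Case A: t_S = m <= t_T - 1 : zeta(0..m-1) in S, zeta(m) \notin S,
           zeta(0..m) in T; the particle settles at zeta(m).
   Case B: t_T - 1 = m - 1 < t_S : m > 0, zeta(0..m-1) in S and in T,
           zeta(m) \notin T; the particle settles at zeta(m-1).
   These finite paths index disjoint cylinder events whose union is the
   event {stopping time finite}. *)
Definition idla_outcome (V : choiceType) (S T : {fset V}) (y : V)
  (p : seq V) : option V :=
  let q := y :: p in
  let m := size p in
  if all (fun v => v \in S) (take m q) && (nth y q m \notin S)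
     && all (fun v => v \in T) q
  then Some (nth y q m)
  else if (0 < m)%N && all (fun v => (v \in S) && (v \in T)) (take m q)
          && (nth y q m \notin T)
  then Some (nth y q m.-1)
  else None.

Local Open Scope ereal_scope.

(* Law of A(S; y |-> T) as a function of the resulting set S'.  On the event
   (of probability 0 unless S is the whole, finite, graph) that the walk never
   stops, the result S u {zeta(oo)} is taken to be S. *)
Definition idla_step (R : realType) (V : choiceType) (adj : V -> seq V)
  (S T : {fset V}) (y : V) (S' : {fset V}) : \bar R :=
  \esum_(p in [set p : seq V | exists z, idla_outcome S T y p = Some z
                                        /\ S' = (z |` S)%fset])
     (path_weight R adj y p)%:E
  + (if S' == S then
       1 - \esum_(p in [set p : seq V | idla_outcome S T y p != None])
             (path_weight R adj y p)%:E
     else 0).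

(* Law of A_k(x |-> T) = A(emptyset; x, ..., x |-> T) (k copies of x),
   with independent walks. *)
Fixpoint idla_law (R : realType) (V : choiceType) (adj : V -> seq V)
  (T : {fset V}) (x : V) (k : nat) : {fset V} -> \bar R :=
  match k with
  | 0 => fun S => (S == fset0)%:R%:E
  | k'.+1 => fun S' =>
      \esum_(S in [set: {fset V}])
        (idla_law R adj T x k' S * idla_step R adj S T x S')
  end.

Definition idla_cover_prob (R : realType) (V : choiceType) (adj : V -> seq V)
  (B : {fset V}) (x : V) (t : nat) : \bar R :=
  \esum_(S in [set S : {fset V} | fsubset B S]) idla_law R adj B x t S.

(* Main.v *)
Require Import Defs.
From HB Require Import structures.
From mathcomp Require Import all_boot all_order all_algebra.
From mathcomp Require Import finmap.
From mathcomp Require Import all_classical all_reals all_analysis.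
From mathcomp Require Import ring lra.

Import Order.TTheory GRing.Theory Num.Theory.
Local Open Scope ring_scope.

Module MA.
Local Open Scope ring_scope.
Set Implicit Arguments.
Unset Strict Implicit.

Section sums.
Variable R : realType.

Lemma sum_sub (T : eqType) (s t : seq T) (f : T -> R) : uniq s -> uniq t ->
  {subset s <= t} -> (forall x, x \in t -> 0 <= f x) ->
  \sum_(x <- s) f x <= \sum_(x <- t) f x.
Proof.
elim: s t => [|x s IH] t /= us ut st f0; first by rewrite big_nil big_seq; apply: sumr_ge0.
case/andP: us => xs us.
have xt : x \in t by apply: st; rewrite inE eqxx.
rewrite big_cons (big_rem x xt) /= lerD2l IH //.
- by rewrite rem_uniq.
- move=> y ys; rewrite (mem_rem_uniq _ ut) inE /=.
  by rewrite (st y) ?inE ?ys ?orbT // andbT; apply: contraNneq xs => <-.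
- by move=> y /mem_rem /f0.
Qed.

Lemma group_sum (T K : eqType) (h : T -> K) (F : seq T) (f : T -> R) :
  \sum_(p <- F) f p = \sum_(v <- undup (map h F)) \sum_(p <- F | h p == v) f p.
Proof.
under [RHS]eq_bigr do rewrite big_mkcond.
rewrite exchange_big /=; apply: eq_big_seq => p pF.
have hK : h p \in undup (map h F) by rewrite mem_undup map_f.
rewrite (big_rem _ hK) /= eqxx big1_seq ?addr0 // => v /andP[_ vr].
case: eqP => // E; move: vr; rewrite -E.
by rewrite (mem_rem_uniq _ (undup_uniq _)) inE eqxx.
Qed.
End sums.

End MA.
Import MA.

Module MB.
Local Open Scope ring_scope.
Set Implicit Arguments.
Unset Strict Implicit.

Section comb.
Variables (R : realType) (V : choiceType) (adj : V -> seq V).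
Local Notation w := (path_weight R adj).
Local Notation srw := (srw_step R adj).

Lemma srw_ge0 u v : 0 <= srw u v.
Proof. by rewrite /srw_step; case: ifP => // _; rewrite invr_ge0. Qed.

Lemma w_ge0 y p : 0 <= w y p.
Proof. by elim: p y => [|v p IH] y //=; rewrite mulr_ge0 ?srw_ge0. Qed.

Lemma w_cat y p s : w y (p ++ s) = w y p * w (last y p) s.
Proof. by elim: p y => [|v p IH] y /=; rewrite ?mul1r // IH mulrA. Qed.

Lemma sum_srw y (K : seq V) : uniq K -> \sum_(v <- K) srw y v <= 1.
Proof.
move=> uK; rewrite /srw_step -big_mkcond /= big_const_seq /=.
set n := size (adj y); set c := count _ K.
have cn : (c <= n)%N.
  rewrite /c -size_filter uniq_leq_size ?filter_uniq // => v.
  by rewrite mem_filter => /andP[].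
have -> : iter c (+%R n%:R^-1) 0 = n%:R^-1 *+ c :> R.
  by elim: (c) => [|k IH] //=; rewrite IH mulrS.
case: (posnP n) => [n0|n0].
  by rewrite n0 invr0 mul0rn.
by rewrite -(mulr_natr (n%:R^-1)) mulrC ler_pdivrMr ?ltr0n // mul1r ler_nat.
Qed.

Definition pfree (F : seq (seq V)) :=
  forall p q, p \in F -> q \in F -> prefix p q -> p = q.

Lemma w_cons y v p : w y (v :: p) = srw y v * w v p.
Proof. by []. Qed.

Lemma group_w y (F : seq (seq V)) : [::] \notin F ->
  \sum_(p <- F) w y p = \sum_(v <- undup (map (head y) F))
     srw y v * \sum_(p <- [seq behead p | p <- F & head y p == v]) w v p.
Proof.
move=> nF; rewrite (group_sum (head y)); apply: eq_bigr => v _.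
rewrite big_map big_filter big_distrr /= big_seq_cond [RHS]big_seq_cond.
apply: eq_bigr => p /andP[pF /eqP hp].
case: p pF hp => [|u p] pF hp; first by rewrite pF in nF.
by rewrite /= -hp.
Qed.

Lemma pf_sub y (F : seq (seq V)) v : pfree F ->
  pfree [seq behead p | p <- F & head y p == v].
Proof.
move=> pfF p' q' /mapP[p]; rewrite mem_filter => /andP[/eqP hp pF] ->.
move=> /mapP[q]; rewrite mem_filter => /andP[/eqP hq qF] -> pre.
case: p hp pF pre => [|a p] hp pF pre; case: q hq qF pre => [|b q] hq qF pre //=.
- by have := pfF _ _ pF qF (prefix0s _).
- by have := pfF _ _ qF pF (prefix0s _).
- simpl in hp, hq, pre; subst a b.
  have := pfF (v :: p) (v :: q) pF qF; rewrite /= eqxx /= => /(_ pre).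
  by case.
Qed.

Lemma uniq_sub y (F : seq (seq V)) v : uniq F -> [::] \notin F ->
  uniq [seq behead p | p <- F & head y p == v].
Proof.
move=> uF nF; rewrite map_inj_in_uniq ?filter_uniq //.
move=> p q; rewrite !mem_filter => /andP[/eqP hp pF] /andP[/eqP hq qF].
case: p hp pF => [|a p] hp pF; first by rewrite pF in nF.
case: q hq qF => [|b q] hq qF; first by rewrite qF in nF.
by simpl in hp, hq; subst a b => /= ->.
Qed.

Lemma pf_nilcase y (F H : seq (seq V)) : [::] \in F -> uniq F -> uniq H ->
  pfree F -> (forall p, p \in F -> exists2 r, r \in H & prefix r p) ->
  \sum_(p <- F) w y p <= \sum_(r <- H) w y r.
Proof.
move=> nF uF uH pfF cF; have wge := w_ge0.
have Hn : [::] \in H.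
  by have [r rH] := cF _ nF; rewrite prefixs0 => /eqP <-.
apply: (@le_trans _ _ (\sum_(r <- [:: [::]]) w y r)).
  apply: sum_sub => //= p pF; rewrite inE; apply/eqP.
  by rewrite (pfF [::] p) ?prefix0s.
by apply: sum_sub => // p; rewrite inE => /eqP ->.
Qed.

Lemma pf_bound n : forall y (F H : seq (seq V)), uniq F -> uniq H ->
  pfree F -> pfree H -> (forall p, p \in F -> (size p <= n)%N) ->
  (forall p, p \in F -> exists2 r, r \in H & prefix r p) ->
  \sum_(p <- F) w y p <= \sum_(r <- H) w y r.
Proof.
elim: n => [|n IH] y F H uF uH pfF pfH sF cF.
all: have wge := w_ge0.
all: have sH : forall G : seq (seq V), \sum_(r <- G) w y r >= 0
      by move=> G; apply: sumr_ge0 => *.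
all: case: (boolP ([::] \in F)) => nF.
- exact: pf_nilcase.
- have -> : F = [::]; last by rewrite big_nil.
  case: F uF pfF sF cF nF => // p F _ _ sF _.
  have := sF p; rewrite inE eqxx /= => /(_ isT).
  by rewrite leqn0 size_eq0 => /eqP ->; rewrite inE eqxx.
- exact: pf_nilcase.
- have sF' : forall v p, p \in [seq behead p | p <- F & head y p == v] ->
        (size p <= n)%N.
    move=> v p0 /mapP[p]; rewrite mem_filter => /andP[_ pF] ->.
    have := sF _ pF; case: p pF => [|a p] pF; first by rewrite pF in nF.
    by [].
  have mFv : forall v p, p \in [seq behead p | p <- F & head y p == v] ->
        v :: p \in F.
    move=> v p0 /mapP[p]; rewrite mem_filter => /andP[/eqP hp pF] ->.
    case: p hp pF => [|a p] /= hp pF; first by rewrite pF in nF.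
    by rewrite -hp.
  rewrite group_w //.
  case: (boolP ([::] \in H)) => nH.
    apply: (@le_trans _ _ (\sum_(v <- undup (map (head y) F)) srw y v)).
      apply: ler_sum => v _; rewrite -[leRHS]mulr1; apply: ler_wpM2l.
        exact: srw_ge0.
      apply: (@le_trans _ _ (\sum_(r <- [:: [::]]) w v r)); last first.
        by rewrite big_seq1.
      apply: IH => //.
      + exact: uniq_sub.
      + exact: pf_sub.
      + by move=> p q; rewrite !inE => /eqP -> /eqP ->.
      + exact: sF'.
      + by move=> p _; exists [::]; rewrite ?inE ?prefix0s.
    apply: (le_trans (sum_srw _ (undup_uniq _))).
    apply: (@le_trans _ _ (\sum_(r <- [:: [::]]) w y r)).
      by rewrite big_seq1.
    by apply: sum_sub => // r; rewrite inE => /eqP ->.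
  rewrite (group_w y nH).
  apply: (@le_trans _ _ (\sum_(v <- undup (map (head y) F))
     srw y v * \sum_(p <- [seq behead p | p <- H & head y p == v]) w v p)).
    apply: ler_sum => v _; apply: ler_wpM2l; first exact: srw_ge0.
    apply: IH.
    + exact: uniq_sub.
    + exact: uniq_sub.
    + exact: pf_sub.
    + exact: pf_sub.
    + exact: sF'.
    + move=> p' /mFv /cF [r rH pre].
      case: r rH pre => [|b r] rH pre; first by rewrite rH in nH.
      move: pre => /= /andP[/eqP eb pre]; subst b.
      exists r => //; apply/mapP; exists (v :: r) => //.
      by rewrite mem_filter /= eqxx.
  apply: sum_sub.
  + exact: undup_uniq.
  + exact: undup_uniq.
  + move=> v; rewrite !mem_undup => /mapP[p pF ->].
    have [r rH pre] := cF _ pF.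
    case: r rH pre => [|b r] rH pre; first by rewrite rH in nH.
    case: p pF pre => [|a p] pF pre; first by rewrite pF in nF.
    move: pre => /= /andP[/eqP eb _]; subst b.
    by apply/mapP; exists (a :: r).
  + move=> v _; apply: mulr_ge0; first exact: srw_ge0.
    by apply: sumr_ge0 => *.
Qed.
End comb.

End MB.
Import MB.

Module MC.
Local Open Scope ring_scope.
Set Implicit Arguments.
Unset Strict Implicit.
Local Open Scope classical_set_scope.
Local Open Scope ereal_scope.

Section esumX.
Variable R : realType.

Lemma esumZr (T : choiceType) (I : set T) (a : T -> \bar R) (c : R) :
  (forall i, I i -> 0 <= a i) -> (0 <= c)%R ->
  \esum_(i in I) (a i * c%:E) = (\esum_(i in I) a i) * c%:E.
Proof.
move=> a0 c0; have [->|cpos] := eqVneq c 0%R.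
  by rewrite mule0 esum1 // => i _; rewrite mule0.
have cgt : (0 < c)%R by rewrite lt_def cpos c0.
apply/eqP; rewrite eq_le; apply/andP; split.
  apply: ge_ereal_sup => _ [X [finX XI] <-]; rewrite fsbig_finite // big_seq.
  rewrite -ge0_sume_distrl; last by move=> i; rewrite in_fset_set // inE => /XI /a0.
  apply: lee_wpmul2r; first by rewrite lee_fin.
  rewrite -big_seq -fsbig_finite //; apply: ereal_sup_ubound; exists X => //.
have h : \esum_(i in I) a i <= (\esum_(i in I) (a i * c%:E)) * (c^-1)%:E.
  apply: ge_ereal_sup => _ [X [finX XI] <-]; rewrite fsbig_finite //.
  apply: (@le_trans _ _ ((\sum_(i <- fset_set X | i \in fset_set X) (a i * c%:E)) * (c^-1)%:E)).
    rewrite -ge0_sume_distrl; last first.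
      by move=> i; rewrite in_fset_set // inE => /XI /a0.
    by rewrite -muleA -EFinM mulfV // mule1 -big_seq.
  apply: lee_wpmul2r; first by rewrite lee_fin invr_ge0.
  rewrite -big_seq -fsbig_finite //; apply: ereal_sup_ubound; exists X => //.
have e : \esum_(i in I) (a i * c%:E) = (\esum_(i in I) (a i * c%:E)) * (c^-1)%:E * c%:E.
  by rewrite -muleA -EFinM mulVf // mule1.
by rewrite [leRHS]e; apply: lee_wpmul2r => //; rewrite lee_fin.
Qed.

Lemma esumZl (T : choiceType) (I : set T) (a : T -> \bar R) (x : \bar R) :
  (forall i, I i -> 0 <= a i) -> 0 <= x -> x \is a fin_num ->
  \esum_(i in I) (x * a i) = x * \esum_(i in I) a i.
Proof.
move=> a0 x0 xf; rewrite -(fineK xf) muleC -esumZr //; last first.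
  by rewrite -lee_fin fineK.
by apply: eq_esum => i _; rewrite muleC.
Qed.

Lemma esum_swap (T1 T2 : choiceType) (a : T1 -> T2 -> \bar R) :
  (forall i j, 0 <= a i j) ->
  \esum_(i in [set: T1]) \esum_(j in [set: T2]) a i j =
  \esum_(j in [set: T2]) \esum_(i in [set: T1]) a i j.
Proof.
move=> a0; rewrite (@esum_esum _ _ _ setT (fun=> setT)) //.
rewrite (@esum_esum _ _ _ setT (fun=> setT)) //.
rewrite (reindex_esum ([set: T2] `*`` (fun=> [set: T1])) _ (fun x => (x.2, x.1)))//.
split=> //=.
- by move=> [i1 i2] [j1 j2] /= _ _ [] -> ->.
- by move=> [i1 i2] _; exists (i2, i1).
Qed.

Lemma esum_sub (T : choiceType) (I J : set T) (a : T -> \bar R) :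
  I `<=` J -> (forall i, J i -> 0 <= a i) ->
  \esum_(i in I) a i <= \esum_(i in J) a i.
Proof.
move=> IJ a0; apply: ge_ereal_sup => _ [X [finX XI] <-].
apply: ereal_sup_ubound; exists X => //; split => //.
by move=> i /XI /IJ.
Qed.

Lemma esum_pt (T : choiceType) (s0 : T) (v : \bar R) : 0 <= v ->
  \esum_(i in [set: T]) (if i == s0 then v else 0) = v.
Proof.
move=> v0; transitivity (\esum_(i in [set s0]) v); last first.
  by rewrite (@esum_set1 _ _ s0 (fun=> v)).
rewrite (esum_mkcond [set s0]); apply: eq_esum => i _.
by rewrite in_set1.
Qed.
End esumX.

End MC.
Import MC.

Module MD.
Local Open Scope ring_scope.
Set Implicit Arguments.
Unset Strict Implicit.

Section outc.
Variable V : choiceType.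
Implicit Types (S T B Q : {fset V}) (y z : V) (p r s : seq V).

Lemma all_nthE (P : pred V) y (q : seq V) m i : all P (take m q) ->
  (i < m)%N -> (i < size q)%N -> P (nth y q i).
Proof.
move=> /(all_nthP y) h im iq; rewrite -(nth_take _ im); apply: h.
by rewrite size_take; case: ifP.
Qed.

Lemma outT S T y p i : idla_outcome S T y p != None -> (i < size p)%N ->
  (nth y (y :: p) i \in S) && (nth y (y :: p) i \in T).
Proof.
move=> + ip; have iq : (i < size (y :: p))%N by rewrite /= ltnS ltnW.
rewrite /idla_outcome; case: ifP => [/andP[/andP[h1 _] h3] _|_].
  rewrite (all_nthE y h1 ip iq) /=.
  by move/(all_nthP y): h3; apply.
case: ifP => // /andP[/andP[_ h1] _] _.
exact: (all_nthE y h1 ip iq).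
Qed.

Lemma outN S T y p : idla_outcome S T y p != None ->
  (nth y (y :: p) (size p) \notin S) || (nth y (y :: p) (size p) \notin T).
Proof.
rewrite /idla_outcome; case: ifP => [/andP[/andP[_ ->] _] //|_].
by case: ifP => // /andP[_ ->]; rewrite orbT.
Qed.

Lemma out_pf S T y p s : idla_outcome S T y p != None ->
  idla_outcome S T y (p ++ s) != None -> s = [::].
Proof.
case: s => // b s o1 o2; exfalso.
have := outT (i := size p) o2; rewrite size_cat /= addnS ltnS leq_addr => /(_ isT).
rewrite -cat_cons nth_cat /= ltnSn => /andP[h1 h2].
by move: (outN o1); rewrite h1 h2.
Qed.

Lemma outA S T y p z : idla_outcome S T y p = Some z -> z \notin S ->
  all (fun v => v \in T) (y :: p) /\ z = nth y (y :: p) (size p).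
Proof.
move=> o zS; have o' : idla_outcome S T y p != None by rewrite o.
move: o; rewrite /idla_outcome; case: ifP => [/andP[_ ->] [<-] //|_].
case: ifP => // /andP[/andP[p0 _] _] [ez].
have := outT (i := (size p).-1) o'; rewrite ltn_predL p0 => /(_ isT) /andP[h _].
by rewrite ez in h; rewrite h in zS.
Qed.

Lemma fh_cover B Q y p : all (fun v => v \in B) (y :: p) ->
  nth y (y :: p) (size p) \in Q ->
  exists2 r, first_hit_path B Q y r & prefix r p.
Proof.
move=> aB lQ; set q := y :: p.
have hq : has (fun v => v \in Q) q by apply/hasP; exists (nth y q (size p)) => //;
  rewrite mem_nth.
set i := find (fun v => v \in Q) q.
have iq : (i < size q)%N by rewrite -has_find.
exists (take i p); last exact: prefix_take.
have e : y :: take i p = rcons (take i q) (nth y q i).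
  by rewrite -take_nth.
move: (lastI y (take i p)); rewrite e => /rcons_inj [eb el].
have nf : nth y q i \in Q by exact: (nth_find y hq).
rewrite /first_hit_path -eb -el nf andbT.
apply/(all_nthP y) => j; rewrite size_take iq => ji.
rewrite nth_take // (before_find _ ji) andbT.
by move/(all_nthP y): aB; apply; apply: ltn_trans iq.
Qed.

Lemma fh_pf B Q y r r' : first_hit_path B Q y r -> first_hit_path B Q y r' ->
  prefix r r' -> r = r'.
Proof.
move=> /andP[_ lQ] + /prefixP[s E]; subst r'; case: s => [|b s].
  by rewrite cats0.
move=> /andP[aB _].
exfalso; move: aB; rewrite belast_cat /= => /allP /(_ (last y r)).
by rewrite mem_cat inE eqxx orbT lQ andbF => /(_ isT).
Qed.
End outc.

End MD.
Import MD.

Module ME.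
Local Open Scope ring_scope.
Set Implicit Arguments.
Unset Strict Implicit.
Local Open Scope classical_set_scope.

Section epf.
Variables (R : realType) (V : choiceType) (adj : V -> seq V).
Local Notation w := (path_weight R adj).

Lemma cover_list (F Hs : set (seq V)) (l : seq (seq V)) :
  (forall p, p \in l -> F p) -> (forall p, F p -> exists2 r, Hs r & prefix r p) ->
  exists Hl : seq (seq V), [/\ uniq Hl, (forall r, r \in Hl -> Hs r) &
     forall p, p \in l -> exists2 r, r \in Hl & prefix r p].
Proof.
move=> lF cF; elim: l lF => [|p l IH] lF.
  by exists [::]; split.
have [Hl [uH HH cH]] : exists Hl : seq (seq V), [/\ uniq Hl, (forall r, r \in Hl -> Hs r) &
     forall p, p \in l -> exists2 r, r \in Hl & prefix r p].
  by apply: IH => q ql; apply: lF; rewrite inE ql orbT.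
have [r Hr pr] := cF p (lF p (mem_head _ _)).
exists (undup (r :: Hl)); split.
- exact: undup_uniq.
- by move=> r'; rewrite mem_undup inE => /orP[/eqP ->|/HH].
- move=> q; rewrite inE => /orP[/eqP ->|/cH [r' r'H pr']].
    by exists r; rewrite // mem_undup mem_head.
  by exists r'; rewrite // mem_undup inE r'H orbT.
Qed.

Lemma esum_pf y (F Hs : set (seq V)) :
  (forall p q, F p -> F q -> prefix p q -> p = q) ->
  (forall p q, Hs p -> Hs q -> prefix p q -> p = q) ->
  (forall p, F p -> exists2 r, Hs r & prefix r p) ->
  (\esum_(p in F) (w y p)%:E <= \esum_(r in Hs) (w y r)%:E)%E.
Proof.
move=> pfF pfH cF; apply: ge_ereal_sup => _ [X [finX XF] <-].
rewrite fsbig_finite // sumEFin.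
set Fl := fset_set X.
have FlF : forall p, p \in (Fl : seq _) -> F p.
  by move=> p; rewrite in_fset_set // inE => /XF.
have [Hl [uH HH cH]] := cover_list FlF cF.
apply: (@le_trans _ _ (\sum_(r <- Hl) w y r)%:E).
  rewrite lee_fin; apply: (@pf_bound R V adj (\max_(p <- (Fl : seq _)) size p)).
  - exact: fset_uniq.
  - exact: uH.
  - by move=> p q pF qF; apply: pfF; apply: FlF.
  - by move=> p q pF qF; apply: pfH; apply: HH.
  - by move=> p pF; exact: (@leq_bigmax_seq _ _ xpredT (fun p : seq V => size p) p pF).
  - exact: cH.
rewrite -sumEFin fsbig_seq //; apply: ereal_sup_ubound; exists [set` Hl] => //.
split; first exact: finite_seq.
by move=> r /= /HH.
Qed.
End epf.

End ME.
Import ME.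

Module MF.
Local Open Scope ring_scope.
Set Implicit Arguments.
Unset Strict Implicit.
Local Open Scope classical_set_scope.

Lemma fin01 (R : realType) (e : \bar R) : (0 <= e)%E -> (e <= 1)%E ->
  exists r : R, e = r%:E /\ 0 <= r <= 1.
Proof.
move=> e0 e1; have ef : e \is a fin_num.
  by rewrite ge0_fin_numE // (le_lt_trans e1) // ltry.
exists (fine e); rewrite fineK //; split => //.
by rewrite -!lee_fin fineK // e0 e1.
Qed.

Local Open Scope ereal_scope.

Section main.
Variables (R : realType) (V : choiceType) (adj : V -> seq V).
Variables (Q B : {fset V}) (x : V).
Local Notation w := (path_weight R adj).

Definition Dset (S : {fset V}) := [set p : seq V | idla_outcome S B x p != None].
Definition Pst S := \esum_(p in Dset S) (w x p)%:E.
Definition FH := [set p : seq V | first_hit_path B Q x p].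

Lemma D_pf S p q : Dset S p -> Dset S q -> prefix p q -> p = q.
Proof.
move=> Dp Dq /prefixP[s E]; subst q.
by rewrite (out_pf Dp Dq) cats0.
Qed.

Lemma esum_le1 (F : set (seq V)) :
  (forall p q, F p -> F q -> prefix p q -> p = q) ->
  \esum_(p in F) (w x p)%:E <= 1.
Proof.
move=> pfF; apply: (le_trans (@esum_pf R V adj x F [set [::]] pfF _ _)).
- by move=> p q -> ->.
- by move=> p _; exists [::]; rewrite ?prefix0s.
- by rewrite esum_set1 // lee_fin; apply: w_ge0.
Qed.

Lemma Pst_ge0 S : 0 <= Pst S.
Proof. by apply: esum_ge0 => p _; rewrite lee_fin w_ge0. Qed.

Lemma Pst_le1 S : Pst S <= 1.
Proof. by apply: esum_le1; apply: D_pf. Qed.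

Lemma hit_ge0 : 0 <= hit_prob R adj B Q x.
Proof. by apply: esum_ge0 => p _; rewrite lee_fin w_ge0. Qed.

Lemma hit_le1 : hit_prob R adj B Q x <= 1.
Proof. by apply: esum_le1 => p q; apply: fh_pf. Qed.

Definition E1 S S' := \esum_(p in [set p : seq V | exists z, idla_outcome S B x p = Some z
                                        /\ S' = (z |` S)%fset]) (w x p)%:E.

Lemma stepE S S' : idla_step R adj S B x S' =
  E1 S S' + (if S' == S then 1 - Pst S else 0).
Proof. by []. Qed.

Lemma step_ge0 S S' : 0 <= idla_step R adj S B x S'.
Proof.
rewrite stepE; apply: adde_ge0.
  by apply: esum_ge0 => p _; rewrite lee_fin w_ge0.
case: ifP => // _; have [r [-> /andP[_ r1]]] := fin01 (Pst_ge0 S) (Pst_le1 S).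
by rewrite -EFinB lee_fin subr_ge0.
Qed.

Lemma step_phi S (phi : {fset V} -> R) : (forall S, (0 <= phi S)%R) ->
  \esum_(S' in [set: {fset V}]) (idla_step R adj S B x S' * (phi S')%:E) =
  \esum_(p in Dset S) (w x p * phi (odflt x (idla_outcome S B x p) |` S)%fset)%:E
  + (1 - Pst S) * (phi S)%:E.
Proof.
move=> phi0.
have [r [Pe /andP[r0 r1]]] := fin01 (Pst_ge0 S) (Pst_le1 S).
have E1ge0 S' : 0 <= E1 S S' by apply: esum_ge0 => p _; rewrite lee_fin w_ge0.
have ifge0 S' : 0 <= (if S' == S then 1 - Pst S else 0).
  by case: ifP => // _; rewrite Pe -EFinB lee_fin subr_ge0.
rewrite (@eq_esum R _ _ _ (fun S' => E1 S S' * (phi S')%:E +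
   (if S' == S then 1 - Pst S else 0) * (phi S')%:E)); last first.
  by move=> S' _; rewrite stepE ge0_muleDl.
rewrite esumD; first last.
- by move=> S' _; apply: mule_ge0; rewrite ?lee_fin.
- by move=> S' _; apply: mule_ge0; rewrite ?lee_fin.
congr (_ + _).
- transitivity (\esum_(S' in [set: {fset V}]) \esum_(p in [set p | exists z,
     idla_outcome S B x p = Some z /\ S' = (z |` S)%fset]) (w x p * phi S')%:E).
    apply: eq_esum => S' _; rewrite /E1 -esumZr //.
    by move=> p _; rewrite lee_fin w_ge0.
  rewrite esum_esum; last by move=> S' p _ _; rewrite lee_fin mulr_ge0 ?w_ge0.
  rewrite (reindex_esum (Dset S) _
     (fun p => ((odflt x (idla_outcome S B x p) |` S)%fset, p))) //.
  split.
  + move=> p; rewrite /Dset /=; case E: (idla_outcome S B x p) => [z|] //= _.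
    by split => //; exists z.
  + by move=> p q _ _ [_ ->].
    move=> [S' p] /= [_ [z [Ez ES]]]; exists p.
      by rewrite /Dset /= Ez.
    by rewrite Ez ES.
- transitivity (\esum_(S' in [set: {fset V}])
     (if S' == S then (1 - Pst S) * (phi S)%:E else 0)).
    by apply: eq_esum => S' _; case: eqP => [->|] //; rewrite mul0e.
  by rewrite esum_pt // mule_ge0 // ?lee_fin //; move: (ifge0 S); rewrite eqxx.
Qed.

Lemma step_mass S :
  \esum_(S' in [set: {fset V}]) idla_step R adj S B x S' <= 1.
Proof.
rewrite (@eq_esum _ _ _ _ (fun S' => idla_step R adj S B x S' * (1%R)%:E));
  last by move=> *; rewrite mule1.
rewrite (@step_phi S (fun=> 1%R)) // mule1.
rewrite (@eq_esum _ _ _ _ (fun p => (w x p)%:E)); last by move=> *; rewrite mulr1.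
rewrite -/(Pst S).
have [r [-> _]] := fin01 (Pst_ge0 S) (Pst_le1 S).
by rewrite -EFinB -EFinD lee_fin addrC subrK.
Qed.

Definition cQ (S : {fset V}) : R := (#|` (S `&` Q)%fset|)%:R.

Lemma cardU1Q S z : (#|` ((z |` S) `&` Q)%fset| <=
  #|` (S `&` Q)%fset| + ((z \in Q) && (z \notin S)))%N.
Proof.
case zQ: (z \in Q).
  have -> : ((z |` S) `&` Q)%fset = (z |` (S `&` Q))%fset.
    by apply/fsetP => v; rewrite !inE; case: (eqVneq v z) => [->|] //=; rewrite ?zQ.
  by rewrite cardfsU1 !inE zQ andbT addnC.
have -> : ((z |` S) `&` Q)%fset = (S `&` Q)%fset.
  by apply/fsetP => v; rewrite !inE; case: (eqVneq v z) => [->|] //=; rewrite ?zQ ?andbF.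
by rewrite leq_addr.
Qed.

Definition Gset S := [set p : seq V | exists z, idla_outcome S B x p = Some z
   /\ z \in Q /\ z \notin S].

Lemma G_bound S : \esum_(p in Dset S `&` Gset S) (w x p)%:E <= hit_prob R adj B Q x.
Proof.
apply: esum_pf.
- by move=> p q [Dp _] [Dq _]; exact: (D_pf Dp Dq).
- by move=> p q; apply: fh_pf.
- move=> p [Dp [z [E [zQ zS]]]].
  have [aB ez] := outA E zS.
  by apply: fh_cover => //; rewrite -ez.
Qed.

Lemma step_c S : \esum_(S' in [set: {fset V}])
  (idla_step R adj S B x S' * (cQ S')%:E) <= (cQ S)%:E + hit_prob R adj B Q x.
Proof.
rewrite step_phi; last by move=> ?; rewrite /cQ ler0n.
have h1 : \esum_(p in Dset S) (w x p * cQ (odflt x (idla_outcome S B x p) |` S)%fset)%:E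
  <= \esum_(p in Dset S) ((w x p)%:E * (cQ S)%:E +
                          (if p \in Gset S then (w x p)%:E else 0)).
  apply: le_esum => p; rewrite /Dset /=.
  case E: (idla_outcome S B x p) => [z|] //= _.
  apply: (@le_trans _ _ ((w x p * (cQ S + ((z \in Q) && (z \notin S))%:R))%:E)).
    rewrite lee_fin; apply: ler_wpM2l; first exact: w_ge0.
    by rewrite /cQ -natrD ler_nat cardU1Q.
  rewrite mulrDr EFinD EFinM; apply: leeD2l.
  case: (boolP ((z \in Q) && (z \notin S))) => [/andP[zQ zS]|nz].
    rewrite mem_set ?mulr1 //; by exists z.
  rewrite mulr0; case: ifP => // _; by rewrite lee_fin w_ge0.
apply: (le_trans (leeD2r _ h1)).
rewrite esumD; first last.
- by move=> p _; case: ifP => // _; rewrite lee_fin w_ge0.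
- by move=> p _; apply: mule_ge0; rewrite lee_fin ?w_ge0 /cQ ?ler0n.
rewrite esumZr; first last.
- by rewrite /cQ ler0n.
- by move=> p _; rewrite lee_fin w_ge0.
rewrite -/(Pst S) -esum_mkcondr.
have [pr [Pe _]] := fin01 (Pst_ge0 S) (Pst_le1 S).
have [hr [He _]] := fin01 hit_ge0 hit_le1.
have hG := G_bound S.
rewrite He in hG *; rewrite Pe.
apply: (@le_trans _ _ ((pr * cQ S)%:E + hr%:E + ((1 - pr) * cQ S)%:E)).
  by rewrite -EFinB; apply: leeD2r; apply: leeD2l.
rewrite -!EFinD lee_fin.
have -> : (pr * cQ S + hr + (1 - pr) * cQ S = cQ S + hr)%R by ring.
by [].
Qed.

End main.

End MF.
Import MF.

Module MG.
Local Open Scope ring_scope.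
Set Implicit Arguments.
Unset Strict Implicit.
Local Open Scope classical_set_scope.
Local Open Scope ereal_scope.

Section law.
Variables (R : realType) (V : choiceType) (adj : V -> seq V).
Variables (Q B : {fset V}) (x : V).
Local Notation w := (path_weight R adj).
Local Notation law := (idla_law R adj B x).
Local Notation step S S' := (idla_step R adj S B x S').
Local Notation cQ := (cQ R Q).

Lemma law_succ k S' : law k.+1 S' =
  \esum_(S in [set: {fset V}]) (law k S * step S S').
Proof. by []. Qed.

Lemma lawE k (phi : {fset V} -> R) : (forall S, 0 <= phi S)%R ->
  (forall S, 0 <= law k S) -> (forall S, law k S \is a fin_num) ->
  \esum_(S' in [set: {fset V}]) (law k.+1 S' * (phi S')%:E) =
  \esum_(S in [set: {fset V}]) (law k S *
      \esum_(S' in [set: {fset V}]) (step S S' * (phi S')%:E)).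
Proof.
move=> phi0 l0 lf.
rewrite (@eq_esum _ _ _ _ (fun S' => \esum_(S in [set: {fset V}])
     (law k S * step S S' * (phi S')%:E))); last first.
  move=> S' _; rewrite law_succ -esumZr //.
  by move=> S _; apply: mule_ge0 => //; apply: step_ge0.
rewrite esum_swap; last first.
  by move=> S S'; apply: mule_ge0; [apply: mule_ge0 => //; apply: step_ge0|
    rewrite lee_fin].
apply: eq_esum => S _; rewrite -esumZl //.
  by apply: eq_esum => S' _; rewrite muleA.
by move=> S' _; apply: mule_ge0; [apply: step_ge0|rewrite lee_fin].
Qed.

Lemma law_inv k : [/\ (forall S, 0 <= law k S),
  \esum_(S in [set: {fset V}]) law k S <= 1 &
  \esum_(S in [set: {fset V}]) (law k S * (cQ S)%:E) <=
     ((k%:R * fine (hit_prob R adj B Q x))%R)%:E].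
Proof.
have [hr [He /andP[hr0 _]]] := fin01 (hit_ge0 R adj Q B x) (hit_le1 R adj Q B x).
rewrite He /=.
elim: k => [|k [l0 lm lc]].
  split.
  - by move=> S; rewrite /= lee_fin ler0n.
  - rewrite (@eq_esum _ _ _ _ (fun S => if S == fset0 then 1 else 0)).
      by rewrite esum_pt.
    by move=> S _ /=; case: eqP.
  - rewrite esum1 ?mul0r //= => S _; case: eqP => [->|] /=.
      by rewrite /cQ fset0I cardfs0 mule0.
    by rewrite mul0e.
have lf S : law k S \is a fin_num.
  have lS : law k S <= 1.
    rewrite -(@esum_set1 _ _ S (law k)) //; apply: le_trans lm.
    by apply: esum_sub => // *; apply: l0.
  by have [r [-> _]] := fin01 (l0 S) lS.
have l0' S : 0 <= law k.+1 S.
  by rewrite law_succ; apply: esum_ge0 => S' _; apply: mule_ge0 => //;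
    apply: step_ge0.
split => //.
- rewrite (@eq_esum _ _ _ _ (fun S => law k.+1 S * (1%R)%:E)); last first.
    by move=> *; rewrite mule1.
  rewrite (@lawE k (fun=> 1%R)) //.
  apply: le_trans lm; apply: le_esum => S _.
  rewrite -[leRHS]mule1; apply: lee_wpmul2l => //.
  rewrite (@eq_esum _ _ _ _ (fun S' => step S S')); last first.
    by move=> *; rewrite mule1.
  exact: step_mass.
- have c0 : forall S, (0 <= cQ S)%R by move=> S; rewrite /cQ ler0n.
  rewrite (@lawE k cQ c0 l0 lf).
  apply: (@le_trans _ _ (\esum_(S in [set: {fset V}])
            (law k S * (cQ S)%:E + law k S * hr%:E))).
    apply: le_esum => S _; rewrite -ge0_muleDr ?lee_fin ?/cQ ?ler0n //.
    apply: lee_wpmul2l => //; rewrite -He; exact: step_c.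
  rewrite esumD; first last.
  + by move=> S _; apply: mule_ge0 => //; rewrite lee_fin.
  + by move=> S _; apply: mule_ge0 => //; rewrite lee_fin /cQ ler0n.
  rewrite esumZr //.
  have [m [-> /andP[m0 m1]]] := fin01 (esum_ge0 (fun S _ => l0 S)) lm.
  apply: (@le_trans _ _ ((k%:R * hr)%:E + (m * hr)%:E)).
    by apply: leeD2r.
  rewrite -EFinD lee_fin -addn1 natrD mulrDl mul1r lerD2l.
  by rewrite -[leRHS]mul1r ler_wpM2r.
Qed.
End law.

End MG.
Import MG.

Unset Implicit Arguments.
Set Strict Implicit.

Theorem lemma3p1 (R : realType) (V : choiceType) (adj : V -> seq V)
  (Q B : {fset V}) (x : V) (t : nat) :
  simple_graph adj -> connected_graph adj ->
  fsubset Q B -> x \in B -> (0 < t)%N ->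
  (idla_cover_prob R adj B x t * ((#|` Q|)%:R / t%:R)%:E
     <= hit_prob R adj B Q x)%E.
Proof.
move=> _ _ QB _ t0.
have [l0 lm lc] := law_inv R adj Q B x t.
have [hr [He /andP[hr0 _]]] := fin01 (hit_ge0 R adj Q B x) (hit_le1 R adj Q B x).
rewrite He /= in lc *.
have cov0 : (0 <= idla_cover_prob R adj B x t)%E.
  by apply: esum_ge0 => S _; apply: l0.
have cov1 : (idla_cover_prob R adj B x t <= 1)%E.
  apply: le_trans lm; apply: esum_sub => // *; exact: l0.
have key : (idla_cover_prob R adj B x t * (#|` Q|%:R)%:E <=
   \esum_(S in [set: {fset V}]) (idla_law R adj B x t S * (cQ R Q S)%:E))%E.
  rewrite /idla_cover_prob -(esumZr (fun S _ => l0 S) (ler0n R _)).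
  apply: (@le_trans _ _ (\esum_(S in [set S : {fset V} | fsubset B S])
       (idla_law R adj B x t S * (cQ R Q S)%:E))%E).
    apply: le_esum => S BS.
    have QS : fsubset Q S by apply: fsubset_trans BS.
    by rewrite /cQ (fsetIidPr _) //.
  by apply: esum_sub => // S _; apply: mule_ge0 => //; rewrite lee_fin /cQ ler0n.
have [cr [Ce /andP[cr0 _]]] := fin01 cov0 cov1.
rewrite Ce in key *.
have k2 := le_trans key lc.
rewrite lee_fin in k2 *.
rewrite -EFinM lee_fin mulrA ler_pdivrMr ?ltr0n // mulrC.
by rewrite mulrC [leRHS]mulrC.
Qed.
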